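(* In the setting described in the context, suppose $T$ and $A$ are irreducible. Then for $0<y<r_A$ and $\nu=0,1,\dots,\tau-1$, \[ \delta(\Gamma_A^*(y\omega_\tau^\nu))=\delta(\Gamma_A^*(y)),\qquad \mu(y\omega_\tau^\nu)=\mu(y)\Delta_M(\omega_\tau^\nu)^{-1},\qquad v(y\omega_\tau^\nu)=\Delta_M(\omega_\tau^\nu)v(y). \]
   Context: Let $M_0,M$ be positive integers. Consider a discrete-time Markov chain of M/G/1 type with state space $\{(0,j):1\le j\le M_0\}\cup\{(k,j):k\ge1,1\le j\le M\}$ and transition matrix in lexicographic order \[ T=\begin{pmatrix}B(0)&B(1)&B(2)&\cdots\\ C(0)&A(1)&A(2)&\cdots\\ O&A(0)&A(1)&\cdots\\ O&O&A(0)&\cdots\\ \vdots&\vdots&\vdots&\ddots\end{pmatrix}, \] with nonnegative blocks $A(k)$ ($M\times M$), $B(0)$, $B(k)$, $C(0)$ of compatible sizes, $A=\sum_{k\ge0}A(k)$ stochastic, $B(0)e+\sum_{k\ge1}B(k)e=e$. $A^*(z)=\sum_{k\ge0}z^kA(k)$ has convergence radius $r_A$; $\Gamma_A^*(z)=z^{-1}A^*(z)$. For a square complex matrix $X$, $\delta(X)$ is a maximum-modulus eigenvalue with nonnegative argument and maximal real part among maximum-modulus eigenvalues. Period $\tau$: in the Markov additive process on $\mathbb Z\times\{1,\dots,M\}$ moving from $(k_0,i)$ to $(k_0+k,j)$ with probability $[\Gamma_A(k)]_{i,j}$, where $\Gamma_A(k)=A(k+1)$ ($k\ge-1$), $O$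 ($k\le-2$), $\tau$ is the common value of $\gcd\{k\ne0:(0,j)\to(k,j)\}$ ($\to$ = reachable with positive probability in $\ge1$ steps). Fix $p:\{1,\dots,M\}\to\{0,\dots,\tau-1\}$ with $[\Gamma_A(k)]_{i,j}>0$ only if $k\equiv p(j)-p(i)\pmod\tau$, and set $\Delta_M(z)=\mathrm{diag}(z^{-p(1)},\dots,z^{-p(M)})$. For $z\in\mathbb C$, $\mu(z)$ and $v(z)$ denote left and right eigenvectors of $\Gamma_A^*(z)$ for the eigenvalue $\delta(\Gamma_A^*(z))$, normalized by $\mu(z)\Delta_M(z/|z|)e=1$ and $\mu(z)v(z)=1$. $\omega_\tau=\exp(2\pi\iota/\tau)$. *)

(* Defs.v *)
From HB Require Import structures.
From mathcomp Require Import all_boot all_order all_algebra.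
From mathcomp Require Import all_classical all_reals all_analysis.
From mathcomp Require Import complex.
Set Implicit Arguments. Unset Strict Implicit. Unset Printing Implicit Defensive.
Import Order.TTheory GRing.Theory Num.Theory.
Import numFieldTopology.Exports numFieldNormedType.Exports.
Local Open Scope ring_scope.
Local Open Scope complex_scope.

Inductive reach (S : Type) (r : S -> S -> Prop) : S -> S -> Prop :=
| reach1 x y : r x y -> reach r x y
| reachS x y z : r x y -> reach r y z -> reach r x z.

(* States: Lev0 i = (0,i), 1<=i<=M0 ; LevS n j = (n+1, j), 1<=j<=M. *)
Inductive mg1_state (M0 M : nat) : Type :=
| Lev0 of 'I_M0
| LevS of nat & 'I_M.

Section Defs.
Variable R : realType.
Local Notation C := (R[i]).

(* Transition matrix T of the M/G/1-type chain.
   B0 = B(0) (M0 x M0); Bs n = B(n+1) (M0 x M); C0 = C(0) (M x M0);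
   A k = A(k) (M x M). *)
Definition mg1_T (M0 M : nat) (B0 : 'M[R]_(M0, M0)) (Bs : nat -> 'M[R]_(M0, M))
  (C0 : 'M[R]_(M, M0)) (A : nat -> 'M[R]_M) (x y : mg1_state M0 M) : R :=
  match x, y with
  | Lev0 i, Lev0 j => B0 i j
  | Lev0 i, LevS n j => Bs n i j
  | LevS 0 i, Lev0 j => C0 i j
  | LevS _ _, Lev0 _ => 0
  | LevS m i, LevS n j => if (m <= n.+1)%N then A (n.+1 - m)%N i j else 0
  end.

Definition irreducible_mx (S : Type) (P : S -> S -> R) : Prop :=
  forall x y, reach (fun a b => 0 < P a b) x y.

Definition Asum (M : nat) (A : nat -> 'M[R]_M) : 'M[R]_M :=
  \matrix_(i, j) limn (series (fun k => A k i j)).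

Definition conv_radius (M : nat) (A : nat -> 'M[R]_M) : \bar R :=
  ereal_sup [set r%:E | r in [set r : R | 0 <= r /\
      forall i j, cvgn (series (fun k => r ^+ k * A k i j))]].

Definition Astar (M : nat) (A : nat -> 'M[R]_M) (z : C) : 'M[C]_M :=
  \matrix_(i, j)
    (limn (series (fun k => A k i j * complex.Re (z ^+ k))) +i*
     limn (series (fun k => A k i j * complex.Im (z ^+ k)))).

Definition GammaStar (M : nat) (A : nat -> 'M[R]_M) (z : C) : 'M[C]_M :=
  z^-1 *: Astar A z.

(* delta(X): maximum-modulus eigenvalue with nonnegative argument
   (i.e. Im >= 0, argument in (-pi, pi]) having maximal real part among
   the maximum-modulus eigenvalues with nonnegative argument. *)
Definition is_delta (M : nat) (X : 'M[C]_M) (d : C) : Prop :=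
  eigenvalue X d /\
  (forall e, eigenvalue X e -> `|e| <= `|d|) /\
  0 <= complex.Im d /\
  (forall e, eigenvalue X e -> `|e| = `|d| -> 0 <= complex.Im e ->
     complex.Re e <= complex.Re d).

Definition DeltaM (M : nat) (p : 'I_M -> nat) (z : C) : 'M[C]_M :=
  diag_mx (\row_j (z ^+ p j)^-1).

Definition onesC (M : nat) : 'cV[C]_M := const_mx 1.

Definition is_mu (M : nat) (A : nat -> 'M[R]_M) (p : 'I_M -> nat) (z : C)
  (mu : 'rV[C]_M) : Prop :=
  exists d, is_delta (GammaStar A z) d /\ mu *m GammaStar A z = d *: mu /\
    mu *m DeltaM p (z / `|z|) *m onesC M = 1%:M.

Definition is_v (M : nat) (A : nat -> 'M[R]_M) (z : C)
  (mu : 'rV[C]_M) (v : 'cV[C]_M) : Prop :=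
  exists d, is_delta (GammaStar A z) d /\ GammaStar A z *m v = d *: v /\
    mu *m v = 1%:M.

(* Markov additive process on Z x {1..M}: (k0,i) -> (k0+k,j) with
   probability [Gamma_A(k)]_{ij}, Gamma_A(k) = A(k+1) (k >= -1), O otherwise. *)
Definition Gamma_k (M : nat) (A : nat -> 'M[R]_M) (k : int) : 'M[R]_M :=
  match k with
  | Posz n => A n.+1
  | Negz 0 => A 0%N
  | Negz _ => 0
  end.

Definition map_step (M : nat) (A : nat -> 'M[R]_M) (x y : int * 'I_M) : Prop :=
  0 < Gamma_k A (y.1 - x.1) x.2 y.2.

Definition is_gcd_set (S : set int) (tau : nat) : Prop :=
  (forall k, S k -> (tau%:Z %| k)%Z) /\
  (forall d : int, (forall k, S k -> (d %| k)%Z) -> (d %| tau%:Z)%Z).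

Definition is_period (M : nat) (A : nat -> 'M[R]_M) (tau : nat) : Prop :=
  forall j : 'I_M, is_gcd_set
    [set k : int | k != 0 /\ reach (map_step A) (0, j) (k, j)] tau.

Definition omega (tau : nat) : C :=
  cos (2 * pi / tau%:R) +i* sin (2 * pi / tau%:R).

End Defs.

(* Main.v *)
Require Import Defs.
From HB Require Import structures.
From mathcomp Require Import all_boot all_order all_algebra.
From mathcomp Require Import all_classical all_reals all_analysis.
From mathcomp Require Import complex.
Import Order.TTheory GRing.Theory Num.Theory.
Import numFieldTopology.Exports numFieldNormedType.Exports.
From mathcomp Require Import ring lra.
From mathcomp Require Import polyrcf.

Module PFpart.
Set Implicit Arguments. Unset Strict Implicit. Unset Printing Implicit Defensive.
Local Open Scope ring_scope.

Lemma sum_ge_term (R : numDomainType) (I : finType) (F : I -> R) i :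
  (forall j, 0 <= F j) -> F i <= \sum_j F j.
Proof. by move=> F0; rewrite (bigD1 i) //= lerDl sumr_ge0. Qed.

Section PF.
Variable R : realType.
Variable n : nat.
Variable G : 'M[R]_n.+1.
Hypothesis G0 : forall i j, 0 <= G i j.
Local Notation I := 'I_n.+1.

Definition mv (u : I -> R) (i : I) := \sum_j G i j * u j.

Lemma mv_ge0 u : (forall i, 0 <= u i) -> forall i, 0 <= mv u i.
Proof. by move=> u0 i; apply: sumr_ge0 => j _; rewrite mulr_ge0. Qed.

Lemma mv_le u w : (forall i, u i <= w i) -> forall i, mv u i <= mv w i.
Proof. by move=> uw i; apply: ler_sum => j _; rewrite ler_wpM2l. Qed.

Lemma mvZ c u i : mv (fun j => c * u j) i = c * mv u i.
Proof. by rewrite /mv mulr_sumr; apply: eq_bigr => j _; rewrite mulrCA. Qed.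

Lemma mvB u w i : mv (fun j => u j - w j) i = mv u i - mv w i.
Proof. by rewrite /mv -sumrB; apply: eq_bigr => j _; rewrite mulrBr. Qed.

Lemma mv_term u i j : (forall k, 0 <= u k) -> G i j * u j <= mv u i.
Proof. move=> u0; rewrite /mv; have := @sum_ge_term _ _ (fun k => G i k * u k) j; apply => k; rewrite mulr_ge0 //. Qed.

Definition Sset (t : R) := exists w : I -> R, (forall i, 0 < w i) /\ (forall i, mv w i < t * w i).

Lemma compare u s t : (forall i, 0 < u i) -> (forall i, s * u i <= mv u i) -> Sset t -> s < t.
Proof.
move=> u0 su [w [w0 wt]].
pose i0 := [arg max_(i > ord0) (u i / w i)]%O.
have [i1 _ Hmax] : extremum_spec >=%O predT (fun i => u i / w i) i0 by apply: arg_maxP.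
set c := u i1 / w i1.
have c0 : 0 < c by rewrite divr_gt0.
have uc : forall i, u i <= c * w i.
  by move=> i; rewrite -ler_pdivrMr //; exact: Hmax.
have e : c * w i1 = u i1 by rewrite /c divfK // gt_eqF.
have : s * u i1 < t * u i1.
  apply: (le_lt_trans (su i1)); apply: (le_lt_trans (mv_le uc i1)).
  rewrite mvZ -e mulrCA ltr_pM2l //.
by rewrite ltr_pM2r.
Qed.

Lemma S_up t t' : Sset t -> t <= t' -> Sset t'.
Proof.
move=> [w [w0 wt]] le; exists w; split => // i.
by apply: (lt_le_trans (wt i)); rewrite ler_wpM2r // ltW.
Qed.

Lemma S_open t : Sset t -> exists2 t', t' < t & Sset t'.
Proof.
move=> [w [w0 wt]].
pose i0 := [arg max_(i > ord0) (mv w i / w i)]%O.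
have [i1 _ Hmax] : extremum_spec >=%O predT (fun i => mv w i / w i) i0 by apply: arg_maxP.
set m := mv w i1 / w i1.
have mt : m < t by rewrite /m ltr_pdivrMr.
have [h1 h2] := midf_lt mt.
exists ((m + t) / 2) => //; exists w; split => // i.
apply: (le_lt_trans _ (_ : m * w i < _)); last by rewrite ltr_pM2r.
by rewrite -ler_pdivrMr //; exact: Hmax.
Qed.

Lemma S_pos t : Sset t -> 0 < t.
Proof.
move=> [w [w0 wt]]; have := le_lt_trans (mv_ge0 (fun i => ltW (w0 i)) ord0) (wt ord0).
by rewrite pmulr_lgt0.
Qed.

Lemma S_ne : Sset (1 + \sum_i \sum_j G i j).
Proof.
exists (fun _ => 1); split => // i; rewrite mulr1 /mv.
rewrite (@le_lt_trans _ _ (\sum_i \sum_j G i j)) ?ltrDr //.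
under eq_bigr do rewrite mulr1.
by have := @sum_ge_term _ _ (fun i => \sum_j G i j) i; apply => k; apply: sumr_ge0.
Qed.

Definition rr := inf Sset.

Lemma Sset_inf : has_inf Sset.
Proof.
split; first by exists (1 + \sum_i \sum_j G i j); exact: S_ne.
by exists 0 => t /S_pos /ltW.
Qed.

Lemma r_lb t : Sset t -> rr <= t.
Proof.
move=> St; rewrite /rr; apply: inf_lbound => //; case: Sset_inf => _ ; done.
Qed.

Lemma gt_r t : rr < t -> Sset t.
Proof.
move=> rt; have tr : 0 < t - rr by rewrite subr_gt0.
have [e Se et] := @inf_adherent _ Sset (t - rr) tr Sset_inf.
by apply: (S_up Se); rewrite /rr addrC subrK in et; apply: ltW.
Qed.

Lemma r_notS : ~ Sset rr.
Proof. by move=> /S_open [t' lt /r_lb]; rewrite leNgt lt. Qed.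

Lemma no_super u s : (forall i, 0 < u i) -> (forall i, s * u i <= mv u i) -> s <= rr.
Proof.
move=> u0 su; rewrite leNgt; apply/negP => rs.
have [h1 h2] := midf_lt rs.
have := compare u0 su (gt_r h1); by rewrite ltNge (ltW h2).
Qed.

Lemma no_super_strict u s : (forall i, 0 < u i) -> (forall i, s * u i < mv u i) -> s < rr.
Proof.
move=> u0 su.
pose i0 := [arg min_(i < ord0) (mv u i / u i)]%O.
have [i1 _ Hmin] : extremum_spec <=%O predT (fun i => mv u i / u i) i0 by apply: arg_minP.
set m := mv u i1 / u i1.
have sm : s < m by rewrite /m ltr_pdivlMr.
apply: (lt_le_trans sm); apply: (no_super u0) => i.
by rewrite -ler_pdivlMr //; exact: Hmin.
Qed.

Lemma invpos t x : Sset t -> (forall i, 0 <= t * x i - mv x i) -> forall i, 0 <= x i.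
Proof.
move=> [w [w0 wt]] hx.
pose i0 := [arg min_(i < ord0) (x i / w i)]%O.
have [i1 _ Hmin] : extremum_spec <=%O predT (fun i => x i / w i) i0 by apply: arg_minP.
set c := x i1 / w i1.
have xc : forall i, c * w i <= x i by move=> i; rewrite -ler_pdivlMr //; exact: Hmin.
have [c0|c0] := leP 0 c.
  by move=> i; apply: le_trans (xc i); rewrite mulr_ge0 // ltW.
exfalso.
pose y i := x i - c * w i.
have y0 : forall i, 0 <= y i by move=> i; rewrite subr_ge0.
have yi1 : y i1 = 0 by rewrite /y /c divfK ?subrr // gt_eqF.
have h1 : 0 < t * y i1 - mv y i1.
  rewrite /y mvB mvZ mulrBr.
  have -> : t * x i1 - t * (c * w i1) - (mv x i1 - c * mv w i1) =
            (t * x i1 - mv x i1) + (- c) * (t * w i1 - mv w i1) by ring.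
  apply: (le_lt_trans (hx i1)); rewrite ltrDl mulr_gt0 //.
    by rewrite oppr_gt0.
  by rewrite subr_gt0.
have := mv_ge0 y0 i1; rewrite yi1 mulr0 sub0r oppr_gt0 in h1.
by rewrite leNgt h1.
Qed.

Definition Am (t : R) : 'M[R]_n.+1 := t%:M - G.

Lemma Am_mulE t m (B : 'M[R]_(n.+1, m)) i j :
  (Am t *m B) i j = t * B i j - mv (fun k => B k j) i.
Proof. by rewrite /Am mulmxBl mul_scalar_mx !mxE. Qed.

Lemma Am_ker t (x : 'cV[R]_n.+1) : \det (Am t) = 0 -> exists2 x : 'cV[R]_n.+1, x != 0 & Am t *m x = 0.
Proof.
rewrite -det_tr => /eqP /det0P [v v0 vA]; exists v^T; first by rewrite trmx_eq0.
by rewrite -[Am t]trmxK -trmx_mul vA trmx0.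
Qed.

Lemma Am_det t : Sset t -> \det (Am t) != 0.
Proof.
move=> St; apply/eqP => /(Am_ker 0) [x x0 Ax].
have h1 : forall i, 0 <= x i 0.
  move=> i; have := invpos (x := fun k => x k 0) St; apply => k.
  by rewrite -(Am_mulE t x k 0) Ax mxE.
have h2 : forall i, 0 <= - x i 0.
  move=> i; have := invpos (x := fun k => - x k 0) St; apply => k.
  have := Am_mulE t (- x) k 0; rewrite mulmxN Ax oppr0 !mxE => e.
  have -> : mv (fun k0 => - x k0 0) k = mv ((- x)^~ 0) k.
    by apply: eq_bigr => l _; rewrite mxE.
  by rewrite -e.
move/negP: x0; apply; apply/eqP/matrixP => i j; rewrite (ord1 j) mxE.
by apply/eqP; rewrite eq_le h1 andbT -oppr_ge0 h2.
Qed.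

Lemma Am_inv_ge0 t : Sset t -> forall i j, 0 <= invmx (Am t) i j.
Proof.
move=> St i j; have U : Am t \in unitmx by rewrite unitmxE unitfE Am_det.
have := invpos (x := fun k => invmx (Am t) k j) St; apply => k.
by rewrite -Am_mulE mulmxV // mxE ler0n.
Qed.

Lemma hornerA t : map_mx (horner_eval t) (char_poly_mx G) = Am t.
Proof.
apply/matrixP => i j; rewrite /char_poly_mx /Am !mxE.
by rewrite /horner_eval hornerD hornerN hornerMn hornerX hornerC.
Qed.

Lemma Am_detE t : \det (Am t) = (char_poly G).[t].
Proof. by rewrite -hornerA det_map_mx. Qed.

Lemma Am_adjE t i j : \adj (Am t) i j = (\adj (char_poly_mx G) i j).[t].
Proof. by rewrite -hornerA -map_mx_adj mxE. Qed.

Lemma adj_inv (B : 'M[R]_n.+1) : B \in unitmx -> \adj B = \det B *: invmx B.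
Proof.
move=> U; rewrite -[\adj B](mulKmx U) mul_mx_adj mul_mx_scalar //.
Qed.

Definition Qp i j := \adj (char_poly_mx G) i j * char_poly G.

Lemma Qp_ge0 t i j : rr < t -> 0 <= (Qp i j).[t].
Proof.
move=> /gt_r St; have U : Am t \in unitmx by rewrite unitmxE unitfE Am_det.
rewrite /Qp hornerM -Am_adjE -Am_detE adj_inv // mxE.
by rewrite mulrC mulrA mulr_ge0 ?Am_inv_ge0 // -expr2 sqr_ge0.
Qed.

Lemma Qp_r_ge0 i j : 0 <= (Qp i j).[rr].
Proof.
rewrite leNgt; apply/negP => neg.
have e0 : 0 < - (Qp i j).[rr] by rewrite oppr_gt0.
have [d d0 Hd] := poly_cont rr (Qp i j) e0.
have hy : `|(rr + d / 2) - rr| < d.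
  by rewrite addrC addKr ger0_norm ?divr_ge0 ?ltW // ltr_pdivrMr // ltr_pMr // ltr1n.
have := Hd _ hy; have := @Qp_ge0 (rr + d / 2) i j.
rewrite ltrDl divr_gt0 // => /(_ isT) h.
rewrite ltr_norml => /andP [_]; rewrite ltrBlDr addNr => h2.
by have := lt_le_trans h2 h; rewrite ltxx.
Qed.

Lemma det_r : (char_poly G).[rr] = 0.
Proof.
apply/eqP; apply/negPn/negP => dr.
have U : Am rr \in unitmx by rewrite unitmxE unitfE Am_detE.
have inv0 : forall i j, 0 <= invmx (Am rr) i j.
  move=> i j; have := Qp_r_ge0 i j.
  rewrite /Qp hornerM -Am_adjE -Am_detE adj_inv // mxE.
  rewrite mulrC mulrA -expr2 pmulr_rge0 //.
  by rewrite exprn_even_gt0 //= Am_detE.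
set x := invmx (Am rr) *m const_mx 1 : 'cV[R]_n.+1.
have Ax : Am rr *m x = const_mx 1 by rewrite /x mulmxA mulmxV // mul1mx.
have x0 : forall i, 0 <= x i 0.
  by move=> i; rewrite mxE; apply: sumr_ge0 => k _; rewrite mxE mulr1 inv0.
have ex : forall i, rr * x i 0 - mv (fun k => x k 0) i = 1.
  by move=> i; rewrite -Am_mulE Ax mxE.
have xp : forall i, 0 < x i 0.
  move=> i; rewrite lt_def x0 andbT; apply/negP => /eqP e.
  have := ex i; rewrite e mulr0 sub0r => /eqP; rewrite eqr_oppLR => /eqP e1.
  by have := mv_ge0 x0 i; rewrite e1 ler0N1.
apply: r_notS; exists (fun i => x i 0); split => // i.
by rewrite -subr_gt0 ex.
Qed.

Lemma eig_r : exists x : I -> R, (exists i, x i != 0) /\ forall i, mv x i = rr * x i.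
Proof.
have hd : \det (Am rr) = 0 by rewrite Am_detE det_r.
have [x x0 Ax] := Am_ker 0 hd.
exists (fun i => x i 0); split.
  apply/existsP; move/negP: x0; apply: contra_notT; rewrite negb_exists => /forallP h.
  by apply/eqP/matrixP => i j; rewrite (ord1 j) mxE; apply/eqP/negbNE/h.
move=> i; have := Am_mulE rr x i 0; rewrite Ax mxE => /eqP.
by rewrite eq_sym subr_eq0 => /eqP.
Qed.

Fixpoint powv (l : nat) (v : I -> R) : I -> R :=
  if l is l'.+1 then mv (powv l' v) else v.

Lemma powv_ge0 l v : (forall i, 0 <= v i) -> forall i, 0 <= powv l v i.
Proof. by move=> v0; elim: l => [|l IH] //= i; apply: mv_ge0. Qed.

Hypothesis Girr : forall i j, reach (fun a b => 0 < G a b) i j.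

Lemma reach_pow v : (forall i, 0 <= v i) -> forall a b,
  reach (fun a b => 0 < G a b) a b -> 0 < v b -> exists l, 0 < powv l.+1 v a.
Proof.
move=> v0 a b H; elim: H => [a' b' Hab | a' b' c' Hab _ IH] vb.
  exists 0%N => /=; apply: lt_le_trans (mv_term a' b' v0).
  by rewrite mulr_gt0.
have [l Hl] := IH vb; exists l.+1.
apply: lt_le_trans (mv_term a' b' (powv_ge0 l.+1 v0)).
by rewrite mulr_gt0.
Qed.

Definition Pv (K : nat) (v : I -> R) (i : I) := \sum_(l < K) powv l.+1 v i.

Lemma P_pos v j : (forall i, 0 <= v i) -> 0 < v j ->
  exists K0, forall K, (K0 <= K)%N -> forall i, 0 < Pv K v i.
Proof.
move=> v0 vj.
have : forall i, exists l, 0 < powv l.+1 v i.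
  by move=> i; apply: (reach_pow v0 (Girr i j) vj).
move=> /choice [f Hf].
exists (\max_i f i).+1 => K HK i.
have fK : (f i < K)%N by apply: leq_trans HK; rewrite ltnS (leq_bigmax i).
apply: (lt_le_trans (Hf i)).
have := @sum_ge_term _ _ (fun l : 'I_K => powv l.+1 v i) (Ordinal fK); apply.
by move=> l; apply: powv_ge0.
Qed.

Lemma powvB l u w s : powv l (fun i => u i - s * w i) = fun i => powv l u i - s * powv l w i.
Proof.
elim: l => [|l IH] //=; apply/funext => i; rewrite IH.
by rewrite (mvB (powv l u) (fun i => s * powv l w i)) mvZ.
Qed.

Lemma powv_mv l v : powv l (mv v) = mv (powv l v).
Proof. by elim: l => [|l IH] //=; rewrite IH. Qed.

Lemma mv_Pv K v i : mv (Pv K v) i = Pv K (mv v) i.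
Proof.
rewrite /mv /Pv.
under eq_bigr do rewrite mulr_sumr.
rewrite exchange_big /=; apply: eq_bigr => l _.
by rewrite [in RHS]/= powv_mv.
Qed.

Lemma PvB K u w s i : Pv K (fun i => u i - s * w i) i = Pv K u i - s * Pv K w i.
Proof.
rewrite /Pv mulr_sumr -sumrB; apply: eq_bigr => l _.
by rewrite powvB.
Qed.

Lemma powv_eig l v s : (forall i, mv v i = s * v i) -> forall i, powv l v i = s ^+ l * v i.
Proof.
move=> e; elim: l => [|l IH] i /=; first by rewrite mul1r.
rewrite (_ : powv l v = fun k => s ^+ l * v k); last by apply/funext.
by rewrite mvZ e mulrCA mulrA exprS.
Qed.

Lemma PF_right : 0 <= rr /\ exists v : I -> R, (forall i, 0 < v i) /\ forall i, mv v i = rr * v i.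
Proof.
have [x [[j xj] ex]] := eig_r.
pose v i := `|x i|.
have v0 : forall i, 0 <= v i by move=> i; apply: normr_ge0.
have vj : 0 < v j by rewrite normr_gt0.
have hv : forall i, `|rr| * v i <= mv v i.
  move=> i; rewrite /v -normrM -ex /mv; apply: (le_trans (ler_norm_sum _ _ _)).
  by apply: ler_sum => k _; rewrite normrM ger0_norm.
have [Kv Hv] := P_pos v0 vj.
case: (boolP [exists i, `|rr| * v i < mv v i]).
  move=> /existsP [i1 h1]; exfalso.
  pose z i := mv v i - `|rr| * v i.
  have z0 : forall i, 0 <= z i by move=> i; rewrite subr_ge0.
  have zi1 : 0 < z i1 by rewrite subr_gt0.
  have [Kz Hz] := P_pos z0 zi1.
  pose K := maxn Kv Kz.
  have := @no_super_strict (Pv K v) `|rr| (Hv K (leq_maxl _ _)).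
  have H : forall i, `|rr| * Pv K v i < mv (Pv K v) i.
    move=> i; rewrite -subr_gt0 mv_Pv -PvB; exact: Hz (leq_maxr _ _) i.
  move=> /(_ H); by rewrite ltNge ler_norm.
rewrite negb_exists => /forallP hn.
have e : forall i, mv v i = `|rr| * v i.
  by move=> i; apply/eqP; rewrite eq_le hv andbT leNgt hn.
have vp : forall i, 0 < v i.
  move=> i; rewrite lt_def v0 andbT; apply/negP => /eqP vi.
  have := Hv Kv (leqnn _) i; rewrite /Pv.
  under eq_bigr do rewrite (powv_eig _ e) vi mulr0.
  by rewrite big1 // ltxx.
have rpos : `|rr| <= rr.
  by apply: (no_super vp) => i; rewrite e.
have r0 : 0 <= rr by apply: le_trans rpos.
split => //; exists v; split => // i; by rewrite e ger0_norm.
Qed.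
End PF.

Lemma reach_snoc (S : Type) (rel : S -> S -> Prop) a b c :
  reach rel a b -> rel b c -> reach rel a c.
Proof.
elim => [x y Hxy | x y z Hxy _ IH] Hc.
  by apply: reachS Hxy (reach1 Hc).
by apply: reachS Hxy (IH Hc).
Qed.

Lemma reach_rev (S : Type) (rel : S -> S -> Prop) a b :
  reach rel a b -> reach (fun x y => rel y x) b a.
Proof.
elim => [x y Hxy | x y z Hxy _ IH]; first by apply: reach1.
by apply: reach_snoc IH Hxy.
Qed.

Theorem PF_full (R : realType) n (G : 'M[R]_n.+1) :
  (forall i j, 0 <= G i j) -> (forall i j, reach (fun a b => 0 < G a b) i j) ->
  exists r (v w : 'I_n.+1 -> R), [/\ 0 <= r, (forall i, 0 < v i), (forall i, 0 < w i),
     (forall i, \sum_j G i j * v j = r * v i) & (forall j, \sum_i w i * G i j = r * w j)].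
Proof.
move=> G0 Girr.
have [r0 [v [v0 ev]]] := PF_right G0 Girr.
have GT0 : forall i j, 0 <= G^T i j by move=> i j; rewrite mxE.
have GTirr : forall i j, reach (fun a b => 0 < G^T a b) i j.
  move=> i j; have := reach_rev (Girr j i).
  elim => [x y Hxy | x y z Hxy _ IH]; first by apply: reach1; rewrite mxE.
  by apply: reachS IH; rewrite mxE.
have [r1 [w [w0 ew]]] := PF_right GT0 GTirr.
have ew' : forall j, \sum_i w i * G i j = rr G^T * w j.
  by move=> j; rewrite -ew /mv; apply: eq_bigr => i _; rewrite mxE mulrC.
have e : rr G = rr G^T.
  have s0 : 0 < \sum_i w i * v i by apply: (lt_le_trans (mulr_gt0 (w0 ord0) (v0 ord0))); have := @sum_ge_term _ _ (fun i => w i * v i) ord0; apply => i; rewrite mulr_ge0 // ltW.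
  apply: (mulIf (lt0r_neq0 s0)).
  have h1 : \sum_i w i * (\sum_j G i j * v j) = rr G * \sum_i w i * v i.
    by rewrite mulr_sumr; apply: eq_bigr => i _; rewrite -/(mv G v i) ev mulrCA.
  have h2 : \sum_i w i * (\sum_j G i j * v j) = rr G^T * \sum_i w i * v i.
    under eq_bigr do rewrite mulr_sumr.
    rewrite exchange_big /= mulr_sumr; apply: eq_bigr => j _.
    by rewrite [RHS]mulrA -ew' mulr_suml; apply: eq_bigr => i _; rewrite mulrA.
  by rewrite -h1 h2.
exists (rr G), v, w; split => //.
  by move=> j; rewrite ew' e.
Qed.

Local Open Scope complex_scope.

Lemma normC_ge0 (R : realType) (a : R) : 0 <= a -> `|a%:C| = a%:C.
Proof. by move=> a0; rewrite ger0_norm // ler0c. Qed.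

Lemma sumC (R : realType) (I : finType) (F : I -> R) : (\sum_i F i)%:C = \sum_i (F i)%:C.
Proof. by rewrite raddf_sum. Qed.

Lemma delta_unique (R : realType) n (X Y : 'M[R[i]]_n) d1 d2 :
  (forall e, eigenvalue X e = eigenvalue Y e) -> is_delta X d1 -> is_delta Y d2 -> d1 = d2.
Proof.
move=> E [e1 [b1 [i1 m1]]] [e2 [b2 [i2 m2]]].
have e1' : eigenvalue Y d1 by rewrite -E.
have e2' : eigenvalue X d2 by rewrite E.
have nn : `|d1| = `|d2| by apply/le_anti; rewrite b2 // b1.
have rr1 : complex.Re d1 = complex.Re d2.
  by apply/le_anti; rewrite m2 // m1.
have ii : complex.Im d1 = complex.Im d2.
  have := add_Re2_Im2 d1; rewrite nn -add_Re2_Im2 rr1 => /complexI /addrI /eqP.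
  by rewrite eqrXn2 // => /eqP.
by move: rr1 ii; clear; case: d1 => a1 c1; case: d2 => a2 c2 /= -> ->.
Qed.

Section Cx.
Variable R : realType.
Variable n : nat.
Variable G : 'M[R]_n.+1.
Variables (r : R) (v w : 'I_n.+1 -> R).
Hypothesis G0 : forall i j, 0 <= G i j.
Hypothesis Girr : forall i j, reach (fun a b => 0 < G a b) i j.
Hypothesis r0 : 0 <= r.
Hypothesis v0 : forall i, 0 < v i.
Hypothesis w0 : forall i, 0 < w i.
Hypothesis ev : forall i, \sum_j G i j * v j = r * v i.
Hypothesis ew : forall j, \sum_i w i * G i j = r * w j.
Local Notation C := R[i].

Definition Gc : 'M[C]_n.+1 := map_mx (real_complex R) G.

Lemma eig_bound e (x : 'rV[C]_n.+1) : x != 0 -> x *m Gc = e *: x -> `|e| <= r%:C.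
Proof.
move=> x0 hx.
pose a j := `|x 0 j|.
have a0 : forall j, 0 <= a j by move=> j; apply: normr_ge0.
have hj : forall j, `|e| * a j <= \sum_i a i * (G i j)%:C.
  move=> j; have /matrixP/(_ 0 j) := hx; rewrite !mxE => exj.
  rewrite /a -normrM -exj; apply: (le_trans (ler_norm_sum _ _ _)).
  by apply: ler_sum => i _; rewrite mxE normrM normC_ge0.
have [j xj] : exists j, x 0 j != 0.
  apply/existsP; move/negP: x0; apply: contra_notT; rewrite negb_exists => /forallP h.
  by apply/eqP/matrixP => i j; rewrite (ord1 i) mxE; apply/eqP/negbNE/h.
set T := \sum_j a j * (v j)%:C.
have T0 : 0 < T.
  apply: (lt_le_trans (_ : 0 < a j * (v j)%:C)).
    by rewrite mulr_gt0 ?normr_gt0 // ltcR.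
  have := @sum_ge_term _ _ (fun j => a j * (v j)%:C) j; apply => k.
  by rewrite mulr_ge0 // ler0c ltW.
rewrite -(ler_pM2r T0).
have -> : r%:C * T = \sum_i a i * (\sum_j (G i j)%:C * (v j)%:C).
  rewrite /T mulr_sumr; apply: eq_bigr => i _.
  rewrite (_ : \sum_j0 _ = (\sum_k G i k * v k)%:C); first by rewrite ev rmorphM mulrCA.
  by rewrite sumC; apply: eq_bigr => k _; rewrite rmorphM.
under [X in _ <= X]eq_bigr do rewrite mulr_sumr.
rewrite exchange_big /= mulr_sumr; apply: ler_sum => k _.
rewrite mulrA; apply: (le_trans (ler_wpM2r _ (hj k))); first by rewrite ler0c ltW.
by rewrite mulr_suml; apply: ler_sum => i _; rewrite mulrA.
Qed.


Definition Wc : 'rV[C]_n.+1 := \row_j (w j)%:C.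

Lemma Wc_eig : Wc *m Gc = r%:C *: Wc.
Proof.
apply/matrixP => i j; rewrite !mxE -rmorphM -ew rmorph_sum; apply: eq_bigr => k _.
by rewrite !mxE rmorphM.
Qed.

Lemma Wc_neq0 : Wc != 0.
Proof.
apply/negP => /eqP /matrixP /(_ 0 ord0); rewrite !mxE => /complexI /eqP.
by rewrite gt_eqF.
Qed.

Lemma left_unique (x : 'rV[C]_n.+1) :
  x *m Gc = r%:C *: x -> x = (x 0 ord0 / (w ord0)%:C) *: Wc.
Proof.
move=> hx; set c := x 0 ord0 / (w ord0)%:C.
have wn0 : (w ord0)%:C != 0 by rewrite fmorph_eq0 gt_eqF.
pose y := x - c *: Wc.
have hy : y *m Gc = r%:C *: y.
  by rewrite mulmxBl -scalemxAl hx Wc_eig scalerBr !scalerA mulrC.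
have y0 : y 0 ord0 = 0 by rewrite !mxE /c divfK // subrr.
have yE : x - c *: Wc = y by [].
clearbody y.
pose a j := `|y 0 j|.
have a0 : forall j, 0 <= a j by move=> j; apply: normr_ge0.
have hj : forall j, r%:C * a j <= \sum_i a i * (G i j)%:C.
  move=> j; have /matrixP/(_ 0 j) := hy; rewrite !mxE => eyj.
  rewrite /a -(normC_ge0 r0) -normrM -eyj; apply: (le_trans (ler_norm_sum _ _ _)).
  by apply: ler_sum => i _; rewrite mxE normrM normC_ge0.
pose e j := \sum_i a i * (G i j)%:C - r%:C * a j.
have e0 : forall j, 0 <= e j * (v j)%:C.
  by move=> j; rewrite mulr_ge0 ?subr_ge0 ?hj // ler0c ltW.
have es : \sum_j e j * (v j)%:C = 0.
  rewrite /e.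
  under eq_bigr do rewrite mulrBl mulr_suml.
  rewrite sumrB exchange_big /=.
  rewrite (_ : \sum_i \sum_j _ = \sum_i a i * (r * v i)%:C).
    apply/eqP; rewrite subr_eq0; apply/eqP; apply: eq_bigr => i _.
    by rewrite rmorphM mulrCA mulrA.
  apply: eq_bigr => i _; rewrite -ev rmorph_sum mulr_sumr; apply: eq_bigr => j _.
  by rewrite rmorphM mulrA.
have heq : forall j, \sum_i a i * (G i j)%:C = r%:C * a j.
  move=> j; have := psumr_eq0P (fun j _ => e0 j) es (i := j) isT.
  move/eqP; rewrite mulf_eq0 fmorph_eq0 (gt_eqF (v0 j)) orbF subr_eq0.
  by move/eqP.
have step : forall k l, 0 < G k l -> 0 < a k -> 0 < a l.
  move=> k l Gkl ak; rewrite lt_def a0 andbT; apply/negP => /eqP al.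
  have : 0 < \sum_i a i * (G i l)%:C.
    apply: (lt_le_trans (_ : 0 < a k * (G k l)%:C)); first by rewrite mulr_gt0 // ltcR.
    have := @sum_ge_term _ _ (fun i => a i * (G i l)%:C) k; apply => i.
    by rewrite mulr_ge0 // ler0c.
  by rewrite heq al mulr0 ltxx.
have prop : forall k l, reach (fun a b => 0 < G a b) k l -> 0 < a k -> 0 < a l.
  move=> k l H; elim: H => [k' l' Hkl | k' l' m' Hkl _ IH] ak.
    exact: step Hkl ak.
  exact: IH (step _ _ Hkl ak).
have ya : forall j, a j = 0.
  move=> j; apply/eqP/negPn/negP => an0; have aj : 0 < a j by rewrite lt_def an0 a0.
  by have := prop _ _ (Girr j ord0) aj; rewrite /a y0 normr0 ltxx.
apply/eqP; rewrite -subr_eq0 yE; apply/eqP/matrixP => i j; rewrite (ord1 i) mxE.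
by apply/eqP; rewrite -normr_eq0; apply/eqP; apply: ya.
Qed.


Lemma delta_r : is_delta Gc r%:C.
Proof.
split; first by apply/eigenvalueP; exists Wc; [exact: Wc_eig | exact: Wc_neq0].
have bnd : forall e, eigenvalue Gc e -> `|e| <= r%:C.
  by move=> e /eigenvalueP [x hx x0]; apply: eig_bound x0 hx.
split; first by move=> e /bnd; rewrite normC_ge0.
split => //= e /bnd eb _ _.
have := le_trans (normc_ge_Re e) eb; rewrite lecR.
by apply: le_trans; apply: ler_norm.
Qed.

Lemma delta_eq d : is_delta Gc d -> d = r%:C.
Proof. by move=> h; apply: (delta_unique _ h delta_r). Qed.

End Cx.

Section Final.
Variable R : realType.
Local Notation C := R[i].
Variable n : nat.
Variables (Gy Gz D Dinv : 'M[C]_n.+1) (r : R) (Wr : 'rV[C]_n.+1) (Vr : 'cV[C]_n.+1).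
Hypothesis DD : D *m Dinv = 1%:M.
Hypothesis DD' : Dinv *m D = 1%:M.
Hypothesis GzE : Gz = D *m Gy *m Dinv.
Hypothesis dr : is_delta Gy r%:C.
Hypothesis dE : forall d, is_delta Gy d -> d = r%:C.
Hypothesis Weig : Wr *m Gy = r%:C *: Wr.
Hypothesis Veig : Gy *m Vr = r%:C *: Vr.
Hypothesis Wu : forall x, x *m Gy = r%:C *: x -> exists c, x = c *: Wr.
Hypothesis Vu : forall x, Gy *m x = r%:C *: x -> exists c, x = c *: Vr.
Hypothesis Wn : (Wr *m onesC R n.+1) 0 0 != 0.
Hypothesis WVn : (Wr *m Vr) 0 0 != 0.

Lemma left_tr e (x : 'rV[C]_n.+1) : x *m Gz = e *: x -> (x *m D) *m Gy = e *: (x *m D).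
Proof.
move=> h; have GD : D *m Gy = Gz *m D by rewrite GzE -mulmxA DD' mulmx1.
by rewrite -mulmxA GD mulmxA h scalemxAl.
Qed.

Lemma left_tr' e (x : 'rV[C]_n.+1) : x *m Gy = e *: x -> (x *m Dinv) *m Gz = e *: (x *m Dinv).
Proof.
move=> h; have GD : Dinv *m Gz = Gy *m Dinv by rewrite GzE !mulmxA DD' mul1mx.
by rewrite -mulmxA GD mulmxA h scalemxAl.
Qed.

Lemma eig_eq e : eigenvalue Gz e = eigenvalue Gy e.
Proof.
apply/eigenvalueP/eigenvalueP => [[x hx x0]|[x hx x0]].
  exists (x *m D); first exact: left_tr.
  apply: contra x0 => /eqP h; by rewrite -[x]mulmx1 -DD mulmxA h mul0mx.
exists (x *m Dinv); first exact: left_tr'.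
apply: contra x0 => /eqP h; by rewrite -[x]mulmx1 -DD' mulmxA h mul0mx.
Qed.

Lemma dzE d : is_delta Gz d -> d = r%:C.
Proof. by move=> h; apply: (delta_unique eig_eq h dr). Qed.

Lemma mx11E (M : 'M[C]_1) : M = (M 0 0)%:M.
Proof. exact: mx11_scalar. Qed.

Definition isMu X Dz (mu : 'rV[C]_n.+1) :=
  exists d, is_delta X d /\ mu *m X = d *: mu /\ mu *m Dz *m onesC R n.+1 = 1%:M.
Definition isV X (mu : 'rV[C]_n.+1) (v : 'cV[C]_n.+1) :=
  exists d, is_delta X d /\ X *m v = d *: v /\ mu *m v = 1%:M.

Let sig := (Wr *m onesC R n.+1) 0 0.

Lemma mu_form mu : isMu Gy 1%:M mu -> exists2 c, mu = c *: Wr & c * sig = 1.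
Proof.
move=> [d [/dE -> [h1 h2]]]; have [c hc] := Wu h1; exists c => //.
move: h2; rewrite mulmx1 hc -scalemxAl => /matrixP /(_ 0 0).
by rewrite /sig !mxE eqxx mulr1n.
Qed.

Lemma final_alg :
 (forall d1 d2, is_delta Gy d1 -> is_delta Gz d2 -> d2 = d1) /\
 (exists mu, isMu Gy 1%:M mu) /\ (forall mu, isMu Gy 1%:M mu -> exists v, isV Gy mu v) /\
 (forall mu mu', isMu Gy 1%:M mu -> isMu Gz D mu' -> mu' = mu *m Dinv) /\
 (forall mu v mu' v', isMu Gy 1%:M mu -> isV Gy mu v -> isMu Gz D mu' -> isV Gz mu' v' -> v' = D *m v).
Proof.
have claim4 : forall mu mu', isMu Gy 1%:M mu -> isMu Gz D mu' -> mu' = mu *m Dinv.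
  move=> mu mu' /mu_form [c -> hc] [d [/dzE -> [h1 h2]]].
  have [c' hc'] := Wu (left_tr h1).
  have e : c' = c.
    move: h2; rewrite hc' -scalemxAl => /matrixP /(_ 0 0).
    rewrite [X in X = _]mxE [X in _ = X]mxE eqxx mulr1n => h.
    by apply: (mulIf Wn); rewrite h hc.
  by rewrite -[mu']mulmx1 -DD mulmxA hc' e.
split.
  by move=> d1 d2 /dE -> /dzE ->.
split.
  exists ((sig)^-1 *: Wr); exists r%:C; split => //; split; first by rewrite -scalemxAl Weig !scalerA mulrC.
  by rewrite mulmx1 -scalemxAl [LHS]mx11E mxE -/sig mulVf.
split.
  move=> mu hmu; have [c hc hcs] := mu_form hmu.
  have cn : c != 0 by apply/eqP => c0; move: hcs; rewrite c0 mul0r => /eqP; rewrite eq_sym oner_eq0.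
  have mVn : (mu *m Vr) 0 0 != 0 by rewrite hc -scalemxAl mxE mulf_neq0.
  exists (((mu *m Vr) 0 0)^-1 *: Vr); exists r%:C; split => //; split.
    by rewrite -scalemxAr Veig !scalerA mulrC.
  by rewrite -scalemxAr [LHS]mx11E mxE mulVf.
split => //.
move=> mu v mu' v' hmu [d [/dE -> [hv1 hv2]]] hmu' [d' [/dzE -> [hv1' hv2']]].
have mu'E := claim4 _ _ hmu hmu'.
have [b hb] := Vu hv1.
have GD : Dinv *m Gz = Gy *m Dinv by rewrite GzE !mulmxA DD' mul1mx.
have h3 : Gy *m (Dinv *m v') = r%:C *: (Dinv *m v').
  by rewrite mulmxA -GD -mulmxA hv1' scalemxAr.
have [b' hb'] := Vu h3.
have e1 : b' * (mu *m Vr) 0 0 = 1.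
  move: hv2'; rewrite mu'E -mulmxA hb' -scalemxAr => /matrixP /(_ 0 0).
  by rewrite [X in X = _]mxE [X in _ = X]mxE eqxx mulr1n.
have e2 : b * (mu *m Vr) 0 0 = 1.
  move: hv2; rewrite hb -scalemxAr => /matrixP /(_ 0 0).
  by rewrite [X in X = _]mxE [X in _ = X]mxE eqxx mulr1n.
have mVn : (mu *m Vr) 0 0 != 0.
  by apply/eqP => h; move: e2; rewrite h mulr0 => /eqP; rewrite eq_sym oner_eq0.
have bb : b' = b by apply: (mulIf mVn); rewrite e1 e2.
by rewrite -[v']mul1mx -DD -mulmxA hb' bb hb.
Qed.
End Final.

Lemma Gc_tr (R : realType) n (G : 'M[R]_n.+1) : (Gc G)^T = Gc G^T.
Proof. by rewrite /Gc map_trmx. Qed.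

Lemma PF_pack (R : realType) n (G : 'M[R]_n.+1) :
  (forall i j, 0 <= G i j) -> (forall i j, reach (fun a b => 0 < G a b) i j) ->
  exists r (Wr : 'rV[R[i]]_n.+1) (Vr : 'cV[R[i]]_n.+1),
  is_delta (Gc G) r%:C /\ (forall d, is_delta (Gc G) d -> d = r%:C) /\
   Wr *m Gc G = r%:C *: Wr /\ Gc G *m Vr = r%:C *: Vr /\
   (forall x, x *m Gc G = r%:C *: x -> exists c, x = c *: Wr) /\
   (forall x, Gc G *m x = r%:C *: x -> exists c, x = c *: Vr) /\
   ((Wr *m onesC R n.+1) 0 0 != 0 /\ (Wr *m Vr) 0 0 != 0).
Proof.
move=> G0 Girr.
have [r [v [w [r0 v0 w0 ev ew]]]] := PF_full G0 Girr.
have GT0 : forall i j, 0 <= G^T i j by move=> i j; rewrite mxE.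
have GTirr : forall i j, reach (fun a b => 0 < G^T a b) i j.
  move=> i j; have := reach_rev (Girr j i).
  elim => [x y Hxy | x y z Hxy _ IH]; first by apply: reach1; rewrite mxE.
  by apply: reachS IH; rewrite mxE.
have evT : forall i, \sum_j G^T i j * w j = r * w i.
  by move=> i; rewrite -ew; apply: eq_bigr => j _; rewrite mxE mulrC.
have ewT : forall j, \sum_i v i * G^T i j = r * v j.
  by move=> j; rewrite -ev; apply: eq_bigr => i _; rewrite mxE mulrC.
exists r, (Wc w), (Wc v)^T; split; [|split; [|split; [|split; [|split; [|split]]]]].
- exact: delta_r G0 r0 v0 w0 ev ew.
- exact: delta_eq G0 r0 v0 w0 ev ew.
- exact: Wc_eig ew.
- apply: trmx_inj; rewrite trmx_mul Gc_tr linearZ /= !trmxK.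
  exact: Wc_eig ewT.
- move=> x hx; have h := left_unique G0 Girr r0 v0 w0 ev ew hx.
  by eexists; exact: h.
- move=> x hx.
  have hx' : x^T *m Gc G^T = r%:C *: x^T.
    by rewrite -Gc_tr -trmx_mul hx linearZ.
  have h := left_unique GT0 GTirr r0 w0 v0 evT ewT hx'.
  eexists; apply: trmx_inj; rewrite linearZ /= trmxK; exact: h.
- split.
  + rewrite !mxE; apply/lt0r_neq0; apply: (lt_le_trans (_ : 0 < Wc w 0 ord0 * onesC R n.+1 ord0 0)).
      by rewrite !mxE mulr1 ltcR.
    have := @sum_ge_term _ _ (fun j => Wc w 0 j * onesC R n.+1 j 0) ord0; apply => k.
    by rewrite !mxE mulr1 ler0c ltW.
  + rewrite !mxE; apply/lt0r_neq0; apply: (lt_le_trans (_ : 0 < Wc w 0 ord0 * (Wc v)^T ord0 0)).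
      by rewrite !mxE mulr_gt0 // ltcR.
    have := @sum_ge_term _ _ (fun j => Wc w 0 j * (Wc v)^T j 0) ord0; apply => k.
    by rewrite !mxE mulr_ge0 // ler0c ltW.
Qed.

End PFpart.
Import PFpart.

Module Opart.
Set Implicit Arguments. Unset Strict Implicit. Unset Printing Implicit Defensive.
Local Open Scope ring_scope.
Local Open Scope complex_scope.

Lemma demoivre (R : realType) (x : R) k :
  (cos x +i* sin x) ^+ k = cos (k%:R * x) +i* sin (k%:R * x).
Proof.
elim: k => [|k IH]; first by rewrite expr0 mul0r cos0 sin0.
rewrite exprSr IH -natr1 mulrDl mul1r cosD sinD.
by simpc; rewrite [sin _ * cos _ + _]addrC.
Qed.

Lemma omegaX (R : realType) tau : (0 < tau)%N -> omega R tau ^+ tau = 1.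
Proof.
move=> t0; rewrite /omega demoivre mulrCA divff ?pnatr_eq0 -?lt0n // mulr1.
by rewrite mulr_natl cos2pi sin2pi.
Qed.

Lemma omega_norm (R : realType) tau : `|omega R tau| = 1.
Proof.
by rewrite normc_def /= cos2Dsin2 sqrtr1.
Qed.

End Opart.
Import Opart.

Module Spart.
Unset Printing Implicit Defensive.
Local Open Scope ring_scope.
Local Open Scope complex_scope.

Section Ser.
Variable R : realType.
Variable n : nat.
Variable A : nat -> 'M[R]_n.+1.
Hypothesis hA : forall k i j, 0 <= A k i j.
Variables (y r' : R).
Hypothesis y0 : 0 < y.
Hypothesis yr : y < r'.
Hypothesis cvr : forall i j, cvgn (series (fun k => r' ^+ k * A k i j)).

Lemma cvg_y i j : cvgn (series (fun k => A k i j * y ^+ k)).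
Proof.
have := @series_le_cvg R (fun k => A k i j * y ^+ k) (fun k => r' ^+ k * A k i j).
move=> h; apply: h; last exact: cvr.
- by move=> k; rewrite mulr_ge0 // exprn_ge0 // ltW.
- by move=> k; rewrite mulr_ge0 // exprn_ge0 // ltW // (lt_trans y0 yr).
- move=> k; rewrite mulrC ler_wpM2r //; apply: lerXn2r; rewrite ?ltW //.
  by rewrite nnegrE ltW.
  by rewrite nnegrE ltW // (lt_trans y0 yr).
Qed.

Definition Sy i j := limn (series (fun k => A k i j * y ^+ k)).

Lemma Sy_ge k i j : A k i j * y ^+ k <= Sy i j.
Proof.
have hom : {homo series (fun k => A k i j * y ^+ k) : a b / (a <= b)%N >-> a <= b}.
  by apply: nondecreasing_series => l _ _; rewrite mulr_ge0 // exprn_ge0 // ltW.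
have h := @nondecreasing_cvgn_le R (series (fun k => A k i j * y ^+ k)) hom (cvg_y i j) k.+1.
apply: le_trans h.
rewrite /series /= big_nat_recr //= lerDr sumr_ge0 // => l _.
by rewrite mulr_ge0 // exprn_ge0 // ltW.
Qed.

Lemma Sy_ge0 i j : 0 <= Sy i j.
Proof. apply: le_trans (Sy_ge 0 i j); by rewrite expr0 mulr1. Qed.

Definition Gr : 'M[R]_n.+1 := \matrix_(i, j) (y^-1 * Sy i j).

Lemma Gr_ge0 i j : 0 <= Gr i j.
Proof. rewrite mxE; apply: mulr_ge0; [by rewrite invr_ge0 ltW | exact: Sy_ge0]. Qed.

Lemma Gr_pos i j : 0 < Asum A i j -> 0 < Gr i j.
Proof.
move=> hp; rewrite mxE mulr_gt0 ?invr_gt0 //.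
case: (pselect (exists k, 0 < A k i j)) => [[k Ak]|nk].
  by apply: lt_le_trans (Sy_ge k i j); rewrite mulr_gt0 // exprn_gt0.
exfalso; move: hp; rewrite /Asum mxE.
have e : (fun k => A k i j) = (fun=> 0).
  apply/funext => k; apply/eqP; rewrite eq_le hA andbT leNgt; apply/negP => h.
  by apply: nk; exists k.
rewrite e (_ : series (fun=> 0) = fun=> 0) ?lim_cst ?ltxx //.
by apply/funext => m; rewrite /series /= big1.
Qed.


Lemma series0 : series (fun=> (0 : R)) = fun=> 0.
Proof. by apply/funext => m; rewrite /series /= big1. Qed.

Lemma GyE : GammaStar A y%:C = Gc Gr.
Proof.
apply/matrixP => i j; rewrite !mxE.
have eRe : (fun k => A k i j * complex.Re ((y%:C) ^+ k)) = (fun k => A k i j * y ^+ k).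
  by apply/funext => k; rewrite -rmorphXn.
have eIm : (fun k => A k i j * complex.Im ((y%:C) ^+ k)) = (fun=> 0).
  by apply/funext => k; rewrite -rmorphXn /= mulr0.
rewrite eRe eIm series0 lim_cst; last exact: Rhausdorff.
by rewrite (_ : limn _ +i* 0 = (Sy i j)%:C) // rmorphM fmorphV.
Qed.


Lemma ReCM (a : R) (q : R[i]) : complex.Re (a%:C * q) = a * complex.Re q.
Proof. by case: q => c d; simpc. Qed.
Lemma ImCM (a : R) (q : R[i]) : complex.Im (a%:C * q) = a * complex.Im q.
Proof. by case: q => c d; simpc. Qed.
Lemma CM (a : R) (q : R[i]) : (complex.Re q * a) +i* (complex.Im q * a) = q * a%:C.
Proof. by case: q => c d; simpc. Qed.

Lemma lim_seriesM (c : R) (f : R^nat) : cvgn (series f) ->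
  limn (series (fun k => c * f k)) = c * limn (series f).
Proof.
move=> cf; have -> : (fun k => c * f k) = c *: f by apply/funext.
by rewrite lim_seriesZ.
Qed.

Variable p : 'I_n.+1 -> nat.
Variable w : R[i].
Hypothesis wn0 : w != 0.
Hypothesis hw : forall k i j, 0 < A k i j -> w ^+ k * w ^+ p i = w * w ^+ p j.

Definition Dm : 'M[R[i]]_n.+1 := diag_mx (\row_j (w ^+ p j)^-1).
Definition Dmi : 'M[R[i]]_n.+1 := diag_mx (\row_j (w ^+ p j)).

Lemma GzE : GammaStar A (y%:C * w) = Dm *m GammaStar A y%:C *m Dmi.
Proof.
rewrite GyE; apply/matrixP => i j; rewrite mul_mx_diag mul_diag_mx !mxE.
set q := w * (w ^+ p j / w ^+ p i).
have wpn : w ^+ p i != 0 by rewrite expf_neq0.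
have term : forall k, (A k i j)%:C * (y%:C * w) ^+ k = (A k i j * y ^+ k)%:C * q.
  move=> k; have [Ak|Ak] := eqVneq (A k i j) 0; first by rewrite Ak mul0r; case: ((y%:C * w) ^+ k) => a b; case: q => c d; simpc.
  have Apos : 0 < A k i j by rewrite lt_def Ak hA.
  rewrite exprMn rmorphM rmorphXn -mulrA; congr (_ * (_ * _)).
  by rewrite /q mulrA -(hw _ _ _ Apos) mulfK.
have eRe : (fun k => A k i j * complex.Re ((y%:C * w) ^+ k)) = (fun k => complex.Re q * (A k i j * y ^+ k)).
  apply/funext => k; rewrite /= -ReCM term ReCM mulrC //.
have eIm : (fun k => A k i j * complex.Im ((y%:C * w) ^+ k)) = (fun k => complex.Im q * (A k i j * y ^+ k)).
  apply/funext => k; rewrite /= -ImCM term ImCM mulrC //.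
rewrite eRe eIm !lim_seriesM; try exact: cvg_y.
rewrite -/(Sy i j) (CM (Sy i j) q) rmorphM fmorphV /q.
field; by rewrite fmorph_eq0 (gt_eqF y0) wpn wn0.
Qed.
End Ser.

End Spart.
Import Spart.
Local Open Scope ring_scope.
Local Open Scope complex_scope.
Local Open Scope classical_set_scope.

Lemma reach_mono (S : Type) (r1 r2 : S -> S -> Prop) a b :
  (forall x y, r1 x y -> r2 x y) -> reach r1 a b -> reach r2 a b.
Proof.
move=> h; elim => [x y Hxy | x y z Hxy _ IH]; first by apply: reach1; apply: h.
by apply: reachS IH; apply: h.
Qed.

Lemma Gamma_shift (R : realType) n (A : nat -> 'M[R]_n) k : Gamma_k A (k%:Z - 1) = A k.
Proof.
case: k => [|k] //.
by rewrite (_ : (k.+1%:Z - 1)%R = k%:Z) // -addn1 PoszD addrK.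
Qed.

Unset Implicit Arguments.
Local Open Scope ring_scope.
Local Open Scope complex_scope.
Local Open Scope classical_set_scope.

Theorem proposition2p10 (R : realType) (M0 M : nat)
  (B0 : 'M[R]_(M0, M0)) (Bs : nat -> 'M[R]_(M0, M)) (C0 : 'M[R]_(M, M0))
  (A : nat -> 'M[R]_M) (tau : nat) (p : 'I_M -> nat) :
  (0 < M0)%N -> (0 < M)%N ->
  (forall i j, 0 <= B0 i j) -> (forall n i j, 0 <= Bs n i j) ->
  (forall i j, 0 <= C0 i j) -> (forall k i j, 0 <= A k i j) ->
  (forall i j, cvgn (series (fun k => A k i j))) ->
  (forall i, \sum_j Asum A i j = 1) ->
  (forall i, series (fun n => \sum_j Bs n i j) @ \oo --> 1 - \sum_j B0 i j) ->
  (forall i, series (fun n => \sum_j A n.+1 i j) @ \oo --> 1 - \sum_j C0 i j) ->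
  irreducible_mx (mg1_T B0 Bs C0 A) ->
  irreducible_mx (fun i j : 'I_M => Asum A i j) ->
  is_period A tau ->
  (forall i, (p i < tau)%N) ->
  (forall (k : int) i j, 0 < Gamma_k A k i j ->
     (k == (p j)%:Z - (p i)%:Z %[mod tau%:Z])%Z) ->
  forall (y : R) (nu : nat), 0 < y -> (y%:E < conv_radius A)%E -> (nu < tau)%N ->
  let z := (y%:C * omega R tau ^+ nu) in
  (forall d1 d2, is_delta (GammaStar A y%:C) d1 -> is_delta (GammaStar A z) d2 ->
     d2 = d1) /\
  (exists mu, is_mu A p y%:C mu) /\
  (forall mu, is_mu A p y%:C mu -> exists v, is_v A y%:C mu v) /\
  (forall mu mu', is_mu A p y%:C mu -> is_mu A p z mu' ->
     mu' = mu *m invmx (DeltaM p (omega R tau ^+ nu))) /\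
  (forall mu v mu' v', is_mu A p y%:C mu -> is_v A y%:C mu v ->
     is_mu A p z mu' -> is_v A z mu' v' ->
     v' = DeltaM p (omega R tau ^+ nu) *m v).
Proof.
destruct M as [|n]; first by [].
move=> _ _ _ _ _ hA _ _ _ _ _ Airr _ pb pc y nu y0 yr _ z.
have t0 : (0 < tau)%N by apply: leq_ltn_trans (pb ord0).
pose w := omega R tau ^+ nu.
have wn0 : w != 0.
  by rewrite expf_neq0 // -normr_eq0 omega_norm oner_eq0.
have wt : w ^+ tau = 1 by rewrite /w exprAC omegaX // expr1n.
have hw : forall k i j, 0 < A k i j -> w ^+ k * w ^+ p i = w * w ^+ p j.
  move=> k i j Ak; have := pc (k%:Z - 1)%R i j; rewrite Gamma_shift => /(_ Ak).
  rewrite eqz_mod_dvd (_ : (k%:Z - 1 - ((p j)%:Z - (p i)%:Z) = (k + p i)%N%:Z - (1 + p j)%N%:Z)%R); last first.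
    by rewrite !PoszD; ring.
  rewrite -eqz_mod_dvd !modz_nat => /eqP [e].
  by rewrite -exprD -(expr_mod _ wt) e (expr_mod _ wt) exprD expr1.
have [_ [r1 [r10 hr1] <-] ylt] := ereal_sup_gt yr.
rewrite lte_fin in ylt.
pose G := Gr R n A y.
have G0 := Gr_ge0 R n A hA y r1 y0 ylt hr1.
have Girr : forall i j, reach (fun a b => 0 < G a b) i j.
  move=> i j; apply: reach_mono (Airr i j) => a b h.
  exact: (Gr_pos R n A hA y r1 y0 ylt hr1 a b h).
have [r [Wr [Vr [dr [dE [We [Ve [Wu [Vu [Wn WVn]]]]]]]]]] := PF_pack G0 Girr.
pose D := Dm R n p w; pose Di := Dmi R n p w.
have DD : D *m Di = 1%:M.
  apply/matrixP => i j; rewrite mul_diag_mx !mxE.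
  by case: eqVneq => [->|]; rewrite ?mulr1n ?mulr0n ?mulr0 // mulVf // expf_neq0.
have DD' : Di *m D = 1%:M.
  apply/matrixP => i j; rewrite mul_diag_mx !mxE.
  by case: eqVneq => [->|]; rewrite ?mulr1n ?mulr0n ?mulr0 // mulfV // expf_neq0.
have GzE' : GammaStar A z = D *m Gc G *m Di.
  by rewrite /z -/w (GzE R n A hA y r1 y0 ylt hr1 p w wn0 hw) GyE.
have F := final_alg DD DD' GzE' dr dE We Ve Wu Vu Wn WVn.
have invD : invmx D = Di.
  have [U _] := mulmx1_unit DD.
  by rewrite -[invmx D]mulmx1 -DD mulmxA mulVmx // mul1mx.
have nz : `|z| = y%:C.
  by rewrite /z normrM normrX omega_norm expr1n mulr1 normC_ge0 // ltW.
have yn0 : y%:C != 0 by rewrite fmorph_eq0 gt_eqF.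
have Dz : DeltaM p (z / `|z|) = D.
  by rewrite nz /z [y%:C * _]mulrC mulfK.
have Dy : DeltaM p (y%:C / `|y%:C|) = 1%:M.
  rewrite normC_ge0 ?ltW // divff // /DeltaM (_ : \row_j _ = const_mx 1) ?diag_const_mx //.
  by apply/matrixP => i j; rewrite !mxE expr1n invr1.
rewrite /is_mu /is_v -/w Dz Dy GyE -/G invD.
exact: F.
Qed.
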